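(* Let $k_1 \le k$ be positive integers and let $d \ge 2$ be an integer. Let $\delta = \frac{97}{420}$ and $\phi = 1.86 - \frac{1}{2100}$. Let $\beta(k) = 0$ for $k = 0, \dots, 8$ and $\beta(k) = \frac{1}{3} - \delta$ for $k \ge 9$. Then $$-(k-1)\delta + \sum_{j=1}^{k-1}\left(\frac{2}{d+j} - \frac{1}{d}\right) + H_{k+1} \le \phi - \beta(k).$$
   Context: $H_n = \sum_{i=1}^n \frac{1}{i}$ denotes the $n$-th harmonic number (with $H_0 = 0$). *)

(* Defs.v *)
From mathcomp Require Import all_boot all_order all_algebra.
Set Implicit Arguments. Unset Strict Implicit. Unset Printing Implicit Defensive.
Import Order.TTheory GRing.Theory Num.Theory.
Local Open Scope ring_scope.

Definition harmonic (R : realFieldType) (n : nat) : R :=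
  \sum_(1 <= i < n.+1) (i%:R)^-1.

Definition delta (R : realFieldType) : R := 97%:R / 420%:R.

Definition phi (R : realFieldType) : R := 186%:R / 100%:R - 1 / 2100%:R.

Definition beta (R : realFieldType) (k : nat) : R :=
  if (k <= 8)%N then 0 else 1 / 3%:R - delta R.

(* Main.v *)
Require Import Defs.
From mathcomp Require Import all_boot all_order all_algebra.
From mathcomp Require Import ring lra.
Import Order.TTheory GRing.Theory Num.Theory.
Local Open Scope ring_scope.

Lemma term_le (R : realFieldType) (d j : nat) : (1 <= d)%N -> (1 <= j)%N ->
  2%:R / (d + j)%:R - 1 / d%:R <= 5%:R^-1 * (j%:R)^-1 :> R.
Proof.
move=> hd hj; rewrite natrD.
have x0 : (0 : R) < d%:R by rewrite ltr0n.
have y0 : (0 : R) < j%:R by rewrite ltr0n.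
set x := d%:R in x0 *; set y := j%:R in y0 *.
rewrite -subr_ge0.
have -> : 5%:R^-1 * y^-1 - (2%:R / (x + y) - 1 / x) =
   ((x - 2%:R * y)^+2 + y^+2) / (5%:R * x * y * (x + y)).
  by field; rewrite -/x -/y; apply/and3P; split; apply/negbT/gt_eqF; lra.
apply: divr_ge0; first by rewrite addr_ge0 // sqr_ge0.
apply: mulr_ge0; last lra.
apply: mulr_ge0; last lra.
apply: mulr_ge0; lra.
Qed.

Lemma term_le2 (R : realFieldType) (d j : nat) : (1 <= d)%N ->
  2%:R / (d + j)%:R - 1 / d%:R <= 1 / d%:R :> R.
Proof.
move=> hd.
have x0 : (0 : R) < d%:R by rewrite ltr0n.
have h : (d%:R : R) <= (d + j)%:R by rewrite ler_nat leq_addr.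
have y0 : (0 : R) < (d+j)%:R by lra.
set x := d%:R in x0 h *; set y := (d+j)%:R in y0 h *.
have : 2%:R / y <= 2%:R / x.
  by rewrite ler_pdivrMr // mulrAC ler_pdivlMr // ler_pM2l.
lra.
Qed.

Definition Hs (R : realFieldType) (k : nat) : R := \sum_(1 <= j < k) (j%:R)^-1.
Definition S (R : realFieldType) (k d : nat) : R :=
  \sum_(1 <= j < k) (2%:R / (d + j)%:R - 1 / d%:R).

Lemma sumS1 (R : realFieldType) (F : nat -> R) n :
  \sum_(1 <= i < n.+2) F i = \sum_(1 <= i < n.+1) F i + F n.+1.
Proof. by rewrite big_nat_recr. Qed.
Lemma sum11 (R : realFieldType) (F : nat -> R) : \sum_(1 <= i < 1) F i = 0.
Proof. by rewrite big_geq. Qed.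

Lemma S_le1 (R : realFieldType) k d : (2 <= d)%N -> S R k d <= 5%:R^-1 * Hs R k.
Proof.
move=> hd; rewrite /S /Hs mulr_sumr big_nat_cond [X in _ <= X]big_nat_cond.
apply: ler_sum => j /andP[/andP[hj _] _]; apply: term_le => //.
exact: leq_trans hd.
Qed.

Lemma S_le2 (R : realFieldType) k d : (2 <= d)%N ->
  S R k d <= (k - 1)%:R * (1 / d%:R).
Proof.
move=> hd; rewrite /S mulr_natl -sumr_const_nat.
apply: ler_sum => j _; apply: term_le2.
exact: leq_trans hd.
Qed.

Definition G (R : realFieldType) k : R :=
  - ((k - 1)%:R * delta R) + 5%:R^-1 * Hs R k + Hs R k.+2.

Lemma G_large (R : realFieldType) k : (9 <= k)%N ->
  G R k <= phi R - (1 / 3%:R - delta R).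
Proof.
elim: k => // k IH hk.
have [h8|h8|<-] := ltngtP 8 k; last first.
  rewrite /G /Hs /delta /phi !sumS1 !sum11 /= ?subSS ?subn0; lra.
  by rewrite ltnS leqNgt h8 in hk.
have {IH} IH := IH h8.
have -> : G R k.+1 = G R k - delta R + 5%:R^-1 * (k%:R)^-1 + (k.+2%:R)^-1.
  rewrite /G /Hs (big_nat_recr k) 1?(big_nat_recr k.+2) //=; last first.
    exact: leq_trans h8.
  rewrite subSS subn0.
  have -> : k = (k - 1).+1 by rewrite subn1 prednK // (leq_trans _ h8).
  rewrite subSS subn0 -addn1 natrD; ring.
have k0 : (9%:R : R) <= k%:R by rewrite ler_nat.
have a1 : (k%:R : R)^-1 <= 9%:R^-1.
  rewrite lef_pV2 ?posrE //; lra.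
have a2 : (k.+2%:R : R)^-1 <= 9%:R^-1.
  have k2 : (9%:R:R) <= k.+2%:R by rewrite -addn2 natrD; lra.
  rewrite lef_pV2 ?posrE //; lra.
move: IH a1 a2; rewrite /delta; move: (k%:R^-1 : R) (k.+2%:R^-1 : R) => y z; lra.
Qed.

Lemma inv12 (R : realFieldType) d : (12 <= d)%N -> 1 / d%:R <= 1 / 12%:R :> R.
Proof.
move=> h; have h' : (12%:R : R) <= d%:R by rewrite ler_nat.
by rewrite !div1r lef_pV2 ?posrE // (lt_le_trans _ h') ?ltr0n.
Qed.

Ltac crunch := rewrite /S /Hs /delta /phi !sumS1 !sum11 /= ?addnS ?addn0 ?subSS ?subn0; lra.

Theorem mainTheorem3 (R : realFieldType) (k1 k d : nat)
  (hk1 : (0 < k1)%N) (hk1k : (k1 <= k)%N) (hd : (2 <= d)%N) :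
  - ((k - 1)%:R * delta R)
    + \sum_(1 <= j < k) (2%:R / (d + j)%:R - 1 / d%:R)
    + harmonic R k.+1
  <= phi R - beta R k.
Proof.
have hk : (1 <= k)%N := leq_trans hk1 hk1k.
have -> : harmonic R k.+1 = Hs R k.+2 by [].
rewrite -/(S R k d).
have h1 := S_le1 R k d hd.
case: (leqP 9 k) => hk9.
  have -> : beta R k = 1 / 3%:R - delta R by rewrite /beta leqNgt hk9.
  have := G_large R k hk9; rewrite /G.
  move=> hG; move: hG h1.
  move: (S R k d) (Hs R k) (Hs R k.+2) ((k-1)%:R * delta R) => s a b c.
  lra.
have -> : beta R k = 0 by rewrite /beta -ltnS hk9.
have h2 := S_le2 R k d hd.
clear hk1 hk1k; move: hk hk9 h1 h2.
case: k => [|[|[|[|[|[|[|[|[|k]]]]]]]]] // _ _ h1 h2;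
  try by (move: h1; move: (S R _ d) => s; crunch).
all: case: (leqP 12 d) => hd12; [
  move: h2 (inv12 R d hd12); move: (S R _ d) (1 / d%:R : R) => s y; crunch
| ].
all: move: hd hd12; case: d {h1 h2} => [|[|[|[|[|[|[|[|[|[|[|[|d]]]]]]]]]]]] // _ _; crunch.
Qed.
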